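(* Every linear SEM-UR satisfying bottleneck faithfulness also satisfies SEM-UR faithfulness (parts (a), (b1), (b2)). The converse fails: there is a linear SEM-UR satisfying SEM-UR faithfulness but violating bottleneck faithfulness (e.g. three latent $H_1,H_2,H_3$, four observed $X_1,\dots,X_4$, $\mathbf A=\mathbf 0$ and $\mathbf B=\begin{bmatrix}0&1&-1\\2&2&0\\3&3&0\\4&0&4\end{bmatrix}$).
   Context: Linear SEM-UR: observed $X_1,\dots,X_q$, latent $H_1,\dots,H_l$, $H=N_H$, $X=\mathbf BH+\mathbf AX+N_X$, $\mathbf A$ strictly lower triangular, independent noises; the causal diagram is the DAG with edge $H_i\to X_j$ of weight $b_{ji}$ iff $b_{ji}\ne0$ and $X_k\to X_j$ of weight $a_{jk}$ iff $a_{jk}\ne0$. Mixing matrix $\mathbf W^{UR}=[(\mathbf I-\mathbf A)^{-1}\mathbf B\;\;(\mathbf I-\mathbf A)^{-1}]$; its $(X_j,N_V)$ entry is the total causal effect of $V$ on $X_j$ (sum over directed paths of products of weights; $1$ if $V=X_j$). Bottleneck faithfulness: for sets $\mathcal J\subseteq\mathcal H\cup\mathcal X$ and $\mathcal K\subseteq\mathcal X$, a bottleneck from $\mathcal J$ to $\mathcal K$ is a set of variables meeting every directed path from an element of $\mathcal J$ to an element of $\mathcal K$, and a minimal bottleneck is one of smallest size. The model satisfies bottleneck faithfulness if for all such $\mathcal J,\mathcal K$ the rank of the submatrix $\mathbf W^{\mathcal J}_{\mathcal K}$ of total causal effects from the variables of $\mathcal J$ to those of $\mathcal K$ equals the size of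 a minimal bottleneck from $\mathcal J$ to $\mathcal K$. $Pa,Ch,De$: parents, children, descendants ($De(V)$ excludes $V$). $\mathrm{TC}(V,\mathcal V)$: vector of total causal effects of $V$ on the elements of $\mathcal V$. Possible children of $V_i$: $De(V_i)$ together with all latent $H\neq V_i$ with $Ch(H)\subseteq De(V_i)$. SEM-UR faithfulness: (a) the total causal effect of any observed or latent variable on any of its descendants is nonzero; (b1) for each $V_i$, $\mathrm{TC}(V_i,De(V_i))$ is not in the span of any $k\le|Ch(V_i)|$ vectors of $\{\mathrm{TC}(V,De(V_i)):V$ a possible child of $V_i\}$, except when $k=|Ch(V_i)|$ and every latent $H_l$ among them has $Ch(H_l)\subseteq Ch(V_i)$; (b2) if $V_i$ is latent then for each child $X_j$, $\mathrm{TC}(V_i,De(V_i)\setminus\{X_j\})$ is not in the span of any $k\le|Ch(X_j)\cup Ch(V_i)|-1$ vectors of $\{\mathrm{TC}(V,De(V_i)\setminus\{X_j\}):V$ a possible child of $X_j\}$, except when $k=|Ch(X_j)\cup Ch(V_i)|-1$ and every latent $H_l$ among them has $Ch(H_l)\subseteq Ch(X_j)\cup Ch(V_i)$. *)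

(* Defs.v *)
From HB Require Import structures.
From mathcomp Require Import all_boot all_order all_algebra.
From mathcomp Require Import reals.
Set Implicit Arguments. Unset Strict Implicit. Unset Printing Implicit Defensive.
Import Order.TTheory GRing.Theory Num.Theory.
Local Open Scope ring_scope.

Section SEMUR.
Variables (R : realType) (q l : nat).
Variables (A : 'M[R]_q) (B : 'M[R]_(q, l)).

(* Variables of the model: latent H_i = inl i, observed X_j = inr j. *)
Definition var := ('I_l + 'I_q)%type.

Definition is_latent (v : var) : bool := if v is inl _ then true else false.

Definition strictly_lower : Prop := forall j k : 'I_q, (j <= k)%N -> A j k = 0.

Definition edge : rel var := fun v w =>
  match v, w with
  | inl i, inr j => B j i != 0
  | inr k, inr j => A j k != 0
  | _, _ => false
  end.

(* Mixing matrix W^UR = [(I-A)^{-1} B  (I-A)^{-1}] ; entry (X_j, N_v). *)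
Definition IAinv : 'M[R]_q := invmx (1%:M - A).
Definition WUR : 'M[R]_(q, l + q) := row_mx (IAinv *m B) IAinv.
Definition var_col (v : var) : 'I_(l + q) :=
  match v with inl i => lshift q i | inr k => rshift l k end.
Definition TCE (v : var) (j : 'I_q) : R := WUR j (var_col v).

Definition Ch (v : var) : {set var} := [set w | edge v w].
Definition De (v : var) : {set var} := [set w | (w != v) && connect edge v w].
Definition De_obs (v : var) : {set 'I_q} := [set j | inr j \in De v].
Definition possible_children (v : var) : {set var} :=
  De v :|: [set h | is_latent h && (h != v) && (Ch h \subset De v)].

Definition in_span_TC (S : {set 'I_q}) (u : var) (T : {set var}) : Prop :=
  exists c : var -> R, forall j, j \in S -> TCE u j = \sum_(v in T) c v * TCE v j.

Definition faithful_a : Prop :=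
  forall (v : var) (j : 'I_q), inr j \in De v -> TCE v j != 0.

Definition faithful_b1 : Prop :=
  forall (v : var) (T : {set var}),
    T \subset possible_children v ->
    (#|T| <= #|Ch v|)%N ->
    ~ (#|T| = #|Ch v| /\ forall h, h \in T -> is_latent h -> Ch h \subset Ch v) ->
    ~ in_span_TC (De_obs v) v T.

Definition faithful_b2 : Prop :=
  forall (v : var) (j : 'I_q), is_latent v -> inr j \in Ch v ->
  forall T : {set var},
    T \subset possible_children (inr j) ->
    (#|T| <= #|Ch (inr j) :|: Ch v| - 1)%N ->
    ~ (#|T| = (#|Ch (inr j) :|: Ch v| - 1)%N /\
       forall h, h \in T -> is_latent h -> Ch h \subset Ch (inr j) :|: Ch v) ->
    ~ in_span_TC (De_obs v :\ j) v T.

Definition semur_faithful : Prop := [/\ faithful_a, faithful_b1 & faithful_b2].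

Definition is_bottleneck (J : {set var}) (K : {set 'I_q}) (S : {set var}) : Prop :=
  forall (x : var) (p : seq var), path edge x p -> x \in J ->
    (if last x p is inr k then k \in K else false) ->
    has (mem S) (x :: p).

Definition min_bottleneck_size (J : {set var}) (K : {set 'I_q}) (n : nat) : Prop :=
  (exists S, is_bottleneck J K S /\ #|S| = n) /\
  (forall S, is_bottleneck J K S -> (n <= #|S|)%N).

Definition Wsub (J : {set var}) (K : {set 'I_q}) : 'M[R]_(#|K|, #|J|) :=
  \matrix_(a < #|K|, b < #|J|) TCE (enum_val b) (enum_val a).

Definition bottleneck_faithful : Prop :=
  forall (J : {set var}) (K : {set 'I_q}), min_bottleneck_size J K (\rank (Wsub J K)).

End SEMUR.

Definition exB_rows : seq (seq int) :=
  [:: [:: 0; 1; -1]; [:: 2; 2; 0]; [:: 3; 3; 0]; [:: 4; 0; 4]]%Z.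
Definition exA (R : realType) : 'M[R]_4 := 0.
Definition exB (R : realType) : 'M[R]_(4, 3) :=
  \matrix_(i < 4, j < 3) ((nth 0%Z (nth [::] exB_rows i) j)%:~R).

(* Main.v *)
Require Import Defs.
From HB Require Import structures.
From mathcomp Require Import all_boot all_order all_algebra.
From mathcomp Require Import reals zify.
Set Implicit Arguments. Unset Strict Implicit. Unset Printing Implicit Defensive.
Import Order.TTheory GRing.Theory Num.Theory.
Local Open Scope ring_scope.

Section Gen.
Variables (R : realType) (q l : nat) (A : 'M[R]_q) (B : 'M[R]_(q, l)).
Hypothesis slA : strictly_lower A.

Definition rk (v : var q l) : nat := match v with inl _ => 0 | inr j => j.+1 end.

Lemma edge_rk v w : edge A B v w -> (rk v < rk w)%N.
Proof.
case: v w => [i|k] [i'|j] //= H.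
rewrite ltnS ltnNge; apply/negP => Hjk; by move: H; rewrite slA ?eqxx.
Qed.

Lemma path_rk x p : path (edge A B) x p -> p != [::] -> (rk x < rk (last x p))%N.
Proof.
elim: p x => [|y p IH] x //= /andP[exy py] _.
case: p IH py => [|z p] IH py /=; first exact: edge_rk.
apply: ltn_trans (edge_rk exy) _; exact: IH.
Qed.

Lemma connect_rk x y : connect (edge A B) x y -> x = y \/ (rk x < rk y)%N.
Proof.
case/connectP => p Hp ->; case: p Hp => [|z p] Hp; first by left.
right; exact: path_rk.
Qed.

Lemma connect_rk_le x y : connect (edge A B) x y -> (rk x <= rk y)%N.
Proof. by case/connect_rk => [->|/ltnW]. Qed.

Lemma De_rk v w : w \in De A B v -> (rk v < rk w)%N.
Proof.
rewrite inE => /andP[wv /connect_rk [E|//]]; by rewrite E eqxx in wv.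
Qed.

Lemma rk_pos_obs w : (0 < rk w)%N -> exists k, w = inr k.
Proof. by case: w => [i|k] //= _; exists k. Qed.

Lemma In_De v w : w != v -> connect (edge A B) v w -> w \in De A B v.
Proof. by move=> H1 H2; rewrite inE H1 H2. Qed.

Lemma conn_split x y : connect (edge A B) x y -> x = y \/
   exists2 z, edge A B x z & connect (edge A B) z y.
Proof.
case/connectP => [[|z p]] /= Hp ->; first by left.
case/andP: Hp => ez pz; right; exists z => //.
by apply/connectP; exists p.
Qed.

Lemma not_reach v t : t \in possible_children A B v ->
  forall y, connect (edge A B) t y -> y != v.
Proof.
move=> /setUP[tD|tP] y cty; apply/negP => /eqP yv; subst y.
  have := De_rk tD; have := connect_rk_le cty; lia.
move: tP; rewrite inE => /andP[/andP[lt tv] Cht].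
case: (conn_split cty) => [E|[z ez czv]]; first by rewrite E eqxx in tv.
have zD : z \in De A B v by apply: (subsetP Cht); rewrite inE.
have := De_rk zD; have := connect_rk_le czv; lia.
Qed.

Lemma bn_remove (J S : {set var q l}) K w : is_bottleneck A B J K S ->
  (forall x y, x \in J -> connect (edge A B) x y -> y != w) ->
  is_bottleneck A B J K (S :\ w).
Proof.
move=> HS Hw x p Hp xJ Hl.
case/hasP: (HS x p Hp xJ Hl) => y yin yS.
apply/hasP; exists y => //.
rewrite /= !inE; rewrite /= in yS; rewrite yS andbT; apply: Hw xJ _; exact: path_connect Hp _ yin.
Qed.

Lemma bn_sub (J0 J S : {set var q l}) K : J0 \subset J -> is_bottleneck A B J K S ->
  is_bottleneck A B J0 K S.
Proof. move=> sub HS x p Hp xJ; apply: HS Hp _; exact: (subsetP sub). Qed.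

Lemma bn_self (J : {set var q l}) K : is_bottleneck A B J K J.
Proof. by move=> x p _ xJ _ /=; rewrite /= xJ. Qed.

Lemma rank_span (J0 : {set var q l}) (K : {set 'I_q}) v (c : var q l -> R) : v \notin J0 ->
  (forall k, k \in K -> TCE A B v k = \sum_(t in J0) c t * TCE A B t k) ->
  (\rank (Wsub A B (v |: J0) K) <= \rank (Wsub A B J0 K))%N.
Proof.
move=> vJ Hc.
pose M := \matrix_(b' < #|J0|, b < #|v |: J0|)
  (if enum_val b == v then c (enum_val b')
   else ((enum_val b' == enum_val b)%:R : R)).
suff -> : Wsub A B (v |: J0) K = Wsub A B J0 K *m M by exact: mxrankM_maxl.
apply/matrixP => a b; rewrite !mxE.
under eq_bigr do rewrite !mxE.
rewrite -(big_enum_val (A := mem J0) (fun t => TCE A B t (enum_val a) *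
   (if enum_val b == v then c t else ((t == enum_val b)%:R : R)))).
case: eqP => [->|ne].
  rewrite Hc; last exact: enum_valP.
  by apply: eq_bigr => t _; rewrite mulrC.
have bJ : enum_val b \in J0.
  by have := enum_valP b; rewrite in_setU1 => /orP[/eqP//|].
rewrite (bigD1 (enum_val b)) //= eqxx mulr1 big1 ?addr0 // => t /andP[_ /negbTE ->].
by rewrite mulr0.
Qed.

Hypothesis bf : bottleneck_faithful A B.

Lemma key (J0 : {set var q l}) (K : {set 'I_q}) v (c : var q l -> R) : v \notin J0 ->
  (forall k, k \in K -> TCE A B v k = \sum_(t in J0) c t * TCE A B t k) ->
  exists S, is_bottleneck A B (v |: J0) K S /\
   forall S', is_bottleneck A B J0 K S' -> (#|S| <= #|S'|)%N.
Proof.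
move=> vJ Hc.
have [[S [HS eS]] _] := bf (v |: J0) K.
have [_ min0] := bf J0 K.
exists S; split => // S' HS'.
rewrite eS; apply: leq_trans (min0 S' HS'); exact: rank_span Hc.
Qed.


Lemma fa : faithful_a A B.
Proof.
move=> v j jD; apply/negP => /eqP H0.
have [[S [HS eS]] _] := bf [set v] [set j].
have W0 : Wsub A B [set v] [set j] = 0.
  apply/matrixP => a b; rewrite !mxE.
  have := enum_valP b; rewrite inE => /eqP ->.
  have := enum_valP a; rewrite inE => /eqP ->; exact: H0.
rewrite W0 mxrank0 in eS.
have S0 : S = set0 by apply/eqP; rewrite -cards_eq0 eS.
move: jD; rewrite inE => /andP[_ /connectP [p Hp Hl]].
have := HS v p Hp (set11 v); rewrite -Hl inE eqxx => /(_ isT).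
by rewrite S0; case/hasP => y _; rewrite /= inE.
Qed.

Lemma edge_obs v w : edge A B v w -> exists k, w = inr k.
Proof. move/edge_rk => H; apply: rk_pos_obs; lia. Qed.

Lemma Ch_De v w : w \in Ch A B v -> w \in De A B v.
Proof.
rewrite inE => e; apply: In_De; last exact: connect1.
apply/negP => /eqP E; subst; have := edge_rk e; lia.
Qed.

Lemma latent_notDe v i : inl i \notin De A B v.
Proof. by apply/negP => /De_rk. Qed.

Lemma path2 (S J : {set var q l}) (K : {set 'I_q}) x k :
  is_bottleneck A B J K S -> x \in J -> edge A B x (inr k) -> k \in K ->
  (x \in S) || (inr k \in S).
Proof.
move=> HS xJ e kK; have := HS x [:: inr k]; rewrite /= e kK /= orbF.
by move=> /(_ isT xJ isT).
Qed.

Lemma fb1 : faithful_b1 A B.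
Proof.
move=> v T HT HTc Hexc [c Hc].
have vT : v \notin T.
  apply/negP => /(subsetP HT) /setUP [/De_rk|]; first lia.
  by rewrite inE eqxx andbF.
have [S [HS Hmin]] := key vT Hc.
have HminT := Hmin T (@bn_self _ _).
have HnoT : forall x y, x \in T -> connect (edge A B) x y -> y != v.
  move=> x y xT; apply: not_reach; exact: (subsetP HT).
case vS: (v \in S).
  have HS' := bn_remove (bn_sub (subsetUr _ _) HS) HnoT.
  by have := Hmin _ HS'; rewrite (cardsD1 v S) vS add1n ltnn.
have ChS : Ch A B v \subset S.
  apply/subsetP => w wC.
  have e : edge A B v w by move: wC; rewrite inE.
  have [k Ek] := edge_obs e; subst w.
  have := @path2 S _ (De_obs A B v) v k HS (setU11 _ _).
  rewrite vS /=; apply; first by move: wC; rewrite inE.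
  by rewrite inE; apply: Ch_De.
have cS : #|S| = #|Ch A B v|.
  have := subset_leq_card ChS; lia.
have SE : Ch A B v = S by apply/eqP; rewrite eqEcard ChS cS leqnn.
apply: Hexc; split; first lia.
move=> h hT; case: h hT => [i|//] hT _.
have : inl i \in possible_children A B v by exact: (subsetP HT).
case/setUP => [|]; first by rewrite (negbTE (latent_notDe _ _)).
rewrite inE => /andP[_ ChD].
apply/subsetP => w wC.
have wD := subsetP ChD w wC.
have e : edge A B (inl i) w by move: wC; rewrite inE.
have [k Ek] := edge_obs e; subst w.
have := @path2 S _ (De_obs A B v) (inl i) k HS.
rewrite in_setU1 hT orbT => /(_ isT e).
have kK : k \in De_obs A B v by rewrite inE.
move/(_ kK); rewrite -SE => /orP [|//].
by rewrite inE; case: v {Hc vT HS Hmin HnoT vS ChS cS SE HT HTc ChD wD kK}.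
Qed.

Lemma lat_notDe (v w : var q l) : is_latent w -> w \notin De A B v.
Proof. by case: w => // i _; apply: latent_notDe. Qed.

Lemma lat_neq (v : var q l) (k : 'I_q) : is_latent v -> inr k != v.
Proof. by case: v. Qed.

Lemma fb2 : faithful_b2 A B.
Proof.
move=> v j vlat jC T HT HTc Hexc [c Hc].
have evj : edge A B v (inr j) by move: jC; rewrite inE.
have vT : v \notin T.
  apply/negP => /(subsetP HT) /setUP [|].
    by rewrite (negbTE (lat_notDe _ vlat)).
  rewrite inE => /andP[_ /subsetP /(_ _ jC)].
  by rewrite inE eqxx.
have [S [HS Hmin]] := key vT Hc.
have HminT := Hmin T (@bn_self _ _).
have HnoT : forall x y, x \in T -> connect (edge A B) x y -> y != v.
  move=> x y xT cxy; apply/negP => /eqP yv; subst y.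
  case: (conn_split cxy) => [E|[z ez czv]].
    by subst x; move: vT; rewrite xT.
  have := edge_rk ez; have := connect_rk_le czv; case: (v) vlat => //= ? _; lia.
have HnoTj : forall x y, x \in T -> connect (edge A B) x y -> y != inr j.
  move=> x y xT; apply: not_reach; exact: (subsetP HT).
case vS: (v \in S).
  have HS' := bn_remove (bn_sub (subsetUr _ _) HS) HnoT.
  by have := Hmin _ HS'; rewrite (cardsD1 v S) vS add1n ltnn.
case jS: (inr j \in S).
  have HS' := bn_remove (bn_sub (subsetUr _ _) HS) HnoTj.
  by have := Hmin _ HS'; rewrite (cardsD1 (inr j) S) jS add1n ltnn.
set U := Ch A B (inr j) :|: Ch A B v.
have jU : inr j \in U by rewrite inE jC orbT.
have cU : #|U :\ inr j| = (#|U| - 1)%N by rewrite (cardsD1 (inr j) U) jU add1n subn1.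
have US : U :\ inr j \subset S.
  apply/subsetP => w; rewrite !inE => /andP[wj /orP[ejw|evw]].
    have [d Ed] := edge_obs ejw; subst w.
    have dK : d \in De_obs A B v :\ j.
      rewrite !inE; apply/andP; split.
        by apply/negP => /eqP dj; move: wj; rewrite dj eqxx.
      apply/andP; split; first exact: lat_neq.
      exact: connect_trans (connect1 evj) (connect1 ejw).
    have := HS v [:: inr j; inr d]; rewrite /= evj dK in_setU1 eqxx /=.
    rewrite vS jS orbF /=; apply => //; rewrite andbT; exact: ejw.
  have [d Ed] := edge_obs evw; subst w.
  have dD : inr d \in De A B v by apply: Ch_De; rewrite inE.
  have dK : d \in De_obs A B v :\ j.
    rewrite !inE; apply/andP; split.
      by apply/negP => /eqP dj; move: wj; rewrite dj eqxx.
    by move: dD; rewrite inE.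
  by have := path2 HS (setU11 _ _) evw dK; rewrite vS.
have cS : #|S| = (#|U| - 1)%N.
  have := subset_leq_card US; rewrite cU => H.
  by apply/eqP; rewrite eqn_leq H andbT; exact: leq_trans HminT HTc.
have SE : U :\ inr j = S by apply/eqP; rewrite eqEcard US cU cS leqnn.
apply: Hexc; split.
  by apply/eqP; rewrite eqn_leq HTc -cS HminT.
move=> h hT; case: h hT => [i|//] hT _.
have : inl i \in possible_children A B (inr j) by exact: (subsetP HT).
case/setUP => [|]; first by rewrite (negbTE (latent_notDe _ _)).
rewrite inE => /andP[_ ChD].
apply/subsetP => w wC.
have wD := subsetP ChD w wC.
have e : edge A B (inl i) w by move: wC; rewrite inE.
have [k Ek] := edge_obs e; subst w.
have kK : k \in De_obs A B v :\ j.
  rewrite !inE; apply/andP; split.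
    by apply/negP => /eqP kj; subst k; have := De_rk wD; rewrite ltnn.
  apply/andP; split; first exact: lat_neq.
  apply: connect_trans (connect1 evj) _.
  by move: wD; rewrite inE => /andP[].
have := path2 HS (_ : inl i \in v |: T) e kK.
rewrite in_setU1 hT orbT => /(_ isT); rewrite -SE => /orP [|].
  by move=> /setD1P[_]; rewrite /U !inE /=; case: (v).
by move=> /setD1P[_].
Qed.

Lemma general : semur_faithful A B.
Proof. split; [exact: fa | exact: fb1 | exact: fb2]. Qed.

End Gen.

Section Ex.
Variable R : realType.
Local Notation A0 := (exA R).
Local Notation B0 := (exB R).
Local Notation e := (edge A0 B0).

Lemma sl0 : strictly_lower A0.
Proof. by move=> j k _; rewrite /exA mxE. Qed.

Lemma Bnz (j : 'I_4) (i : 'I_3) :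
  (B0 j i != 0) = (nth 0%Z (nth [::] exB_rows j) i != 0%Z).
Proof. by rewrite mxE intr_eq0. Qed.

Lemma e_obs k w : e (inr k) w = false.
Proof. by case: w => // j; rewrite /= /exA mxE eqxx. Qed.

Lemma TCE_l i j : TCE A0 B0 (inl i) j = B0 j i.
Proof.
by rewrite /TCE /WUR /IAinv /exA subr0 invmx1 /= row_mxEl mul1mx.
Qed.

Lemma TCE_r k j : TCE A0 B0 (inr k) j = (j == k)%:R.
Proof.
by rewrite /TCE /WUR /IAinv /exA subr0 invmx1 /= row_mxEr mxE.
Qed.

Lemma conn_obs k y : connect e (inr k) y -> y = inr k.
Proof.
case/conn_split => [->//|[z]]; by rewrite e_obs.
Qed.

Lemma De_obs0 k : De A0 B0 (inr k) = set0.
Proof.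
apply/setP => w; rewrite !inE; apply/negP => /andP[wk /conn_obs E].
by rewrite E eqxx in wk.
Qed.

Lemma Ch_obs0 k : Ch A0 B0 (inr k) = set0.
Proof. by apply/setP => w; rewrite !inE e_obs. Qed.

Lemma De_lat i w : w \in De A0 B0 (inl i) -> e (inl i) w.
Proof.
rewrite inE => /andP[wi /conn_split [E|[z ez czw]]]; first by rewrite E eqxx in wi.
by case: z ez czw => // k ez /conn_obs ->.
Qed.

Lemma sep (i i' : 'I_3) : i != i' -> exists2 j : 'I_4, B0 j i' != 0 & B0 j i == 0.
Proof.
case: i => [[|[|[|m]]] Hi] //; case: i' => [[|[|[|m']]] Hi'] // ne.
- by exists (@Ordinal 4 0 isT); [rewrite Bnz | rewrite -[_ == 0]negbK Bnz].
- by exists (@Ordinal 4 0 isT); [rewrite Bnz | rewrite -[_ == 0]negbK Bnz].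
- by exists (@Ordinal 4 3 isT); [rewrite Bnz | rewrite -[_ == 0]negbK Bnz].
- by exists (@Ordinal 4 3 isT); [rewrite Bnz | rewrite -[_ == 0]negbK Bnz].
- by exists (@Ordinal 4 1 isT); [rewrite Bnz | rewrite -[_ == 0]negbK Bnz].
- by exists (@Ordinal 4 1 isT); [rewrite Bnz | rewrite -[_ == 0]negbK Bnz].
Qed.

Lemma colnz (i : 'I_3) : exists j : 'I_4, B0 j i != 0.
Proof.
case: i => [[|[|[|m]]] Hi] //.
- by exists (@Ordinal 4 1 isT); rewrite Bnz.
- by exists (@Ordinal 4 1 isT); rewrite Bnz.
- by exists (@Ordinal 4 0 isT); rewrite Bnz.
Qed.

Lemma ex_fa : faithful_a A0 B0.
Proof.
move=> [i|k] j; last by rewrite De_obs0 inE.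
by move/De_lat; rewrite /= TCE_l.
Qed.

Lemma ex_fb1 : faithful_b1 A0 B0.
Proof.
move=> [i|k] T HT HTc Hexc [c Hc]; last first.
  rewrite Ch_obs0 cards0 leqn0 cards_eq0 in HTc.
  apply: Hexc; rewrite (eqP HTc) Ch_obs0 cards0; split => // h; by rewrite inE.
have TC : forall t, t \in T -> e (inl i) t.
  move=> t /(subsetP HT) /setUP [/De_lat //|].
  rewrite inE; case: t => [i'|//] /andP[/andP[_ ne] sub].
  have ne' : i != i' by apply: contra ne => /eqP ->.
  have [j Bj Bi] := sep ne'.
  have := subsetP sub (inr j); rewrite !inE /= Bj => /(_ isT).
  by move=> /conn_split [//|[z]]; case: z => // k ez /conn_obs [E]; subst k; move: ez; rewrite /= (eqP Bi) eqxx.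
case: (boolP (Ch A0 B0 (inl i) \subset T)) => [sub|].
  apply: Hexc; split.
    by apply/eqP; rewrite eqn_leq HTc subset_leq_card.
  by move=> [i'|//] /TC.
case/subsetPn => w wC wT.
have ew : e (inl i) w by move: wC; rewrite inE.
have [k Ek] := edge_obs sl0 ew; subst w.
have kK : k \in De_obs A0 B0 (inl i).
  by rewrite inE; apply: (Ch_De sl0); rewrite inE.
have := Hc k kK; rewrite TCE_l big1.
  by move: ew => /= /eqP.
move=> t tT; have [k' Ek'] := edge_obs sl0 (TC t tT); subst t.
rewrite TCE_r; case: eqP => [E|_]; last by rewrite mulr0.
by subst k'; rewrite tT in wT.
Qed.

Lemma ex_fb2 : faithful_b2 A0 B0.
Proof.
move=> [i|//] j _ jC T HT HTc Hexc [c Hc].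
have T0 : T = set0.
  apply/setP => t; rewrite inE; apply/negP => /(subsetP HT) /setUP [|].
    by rewrite De_obs0 inE.
  rewrite inE; case: t => [i'|//] /andP[_ sub].
  have [j' Bj'] := colnz i'.
  by have := subsetP sub (inr j'); rewrite De_obs0 !inE /= Bj' => /(_ isT).
subst T.
have : (0 < #|Ch A0 B0 (inl i) :\ inr j|)%N.
  rewrite lt0n; apply/negP => /eqP C0.
  apply: Hexc; split; last by move=> h; rewrite inE.
  by rewrite cards0 Ch_obs0 set0U (cardsD1 (inr j)) jC C0.
rewrite card_gt0 => /set0Pn [w /setD1P [wj wC]].
have ew : e (inl i) w by move: wC; rewrite inE.
have [k Ek] := edge_obs sl0 ew; subst w.
have kK : k \in De_obs A0 B0 (inl i) :\ j.
  rewrite !inE; apply/andP; split; first by apply: contra wj => /eqP ->.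
  by have := Ch_De sl0 wC; rewrite inE.
have := Hc k kK; rewrite TCE_l big_set0.
by move: ew => /= /eqP.
Qed.

Lemma ex_sf : semur_faithful A0 B0.
Proof. split; [exact: ex_fa | exact: ex_fb1 | exact: ex_fb2]. Qed.

Lemma ex_nbf : ~ bottleneck_faithful A0 B0.
Proof.
pose i0 := @Ordinal 3 0 isT; pose i1 := @Ordinal 3 1 isT.
pose k1 := @Ordinal 4 1 isT; pose k2 := @Ordinal 4 2 isT.
pose J : {set var 4 3} := [set inl i0; inl i1].
pose K : {set 'I_4} := [set k1; k2].
move=> bf; have [[S [HS eS]] _] := bf J K.
have r1 : (\rank (Wsub A0 B0 J K) <= 1)%N.
  have -> : Wsub A0 B0 J K =
     (\col_(a < #|K|) B0 (enum_val a) i0) *m const_mx (1 : R).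
    apply/matrixP => a b; rewrite !mxE big_ord1 !mxE mulr1.
    have := enum_valP a; rewrite !inE => /orP [] /eqP ->;
    have := enum_valP b; rewrite !inE => /orP [] /eqP ->; by rewrite TCE_l !mxE.
  exact: leq_trans (mxrankM_maxl _ _) (rank_leq_col _).
have cS : (#|S| <= 1)%N by rewrite eS.
have p1 := path2 HS (_ : inl i0 \in J) (_ : e (inl i0) (inr k1)) (_ : k1 \in K).
have p2 := path2 HS (_ : inl i1 \in J) (_ : e (inl i1) (inr k2)) (_ : k2 \in K).
rewrite !inE eqxx ?orbT /= ?Bnz in p1 p2.
have {}p1 := p1 isT isT isT; have {}p2 := p2 isT isT isT.
move/card_le1_eqP: cS => H.
by case/orP: p1 => x1; case/orP: p2 => x2; have := H _ _ x1 x2.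
Qed.

End Ex.

Unset Implicit Arguments.
Local Close Scope ring_scope.

Theorem mainTheorem14 (R : realType) :
  (forall (q l : nat) (A : 'M[R]_q) (B : 'M[R]_(q, l)),
      strictly_lower A -> bottleneck_faithful A B -> semur_faithful A B) /\
  [/\ strictly_lower (exA R), semur_faithful (exA R) (exB R)
    & ~ bottleneck_faithful (exA R) (exB R)].
Proof.
split; first by move=> q l A B slA bf; exact: general slA bf.
split; [exact: sl0 | exact: ex_sf | exact: ex_nbf].
Qed.
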